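(* Let $A:\mathbb{R}^n\rightrightarrows\mathbb{R}^n$ be a maximally monotone symmetric linear relation. Then $q_A^*=q_{A^{-1}}$, that is, $$q_A^*(y)=\begin{cases}\frac12\langle y,A^{-1}y\rangle,& y\in\operatorname{ran}A,\\ \infty,& y\notin\operatorname{ran}A.\end{cases}$$ Consequently, $$q_A^{**}(x)=\begin{cases}\frac12\langle x,Ax\rangle,& x\in\operatorname{ran}A^{-1},\\ \infty,& x\notin\operatorname{ran}A^{-1},\end{cases}$$ so $q_A^{**}=q_A$, and $q_A$ is lower semicontinuous and convex.
   Context: A linear relation is an operator $A:\mathbb{R}^n\rightrightarrows\mathbb{R}^n$ whose graph is a linear subspace of $\mathbb{R}^n\times\mathbb{R}^n$; monotone means $\langle x^*-y^*,x-y\rangle\ge0$ on the graph; maximally monotone means no monotone operator has strictly larger graph; symmetric means $\langle x,y^*\rangle=\langle y,x^*\rangle$ for all $(x,x^* ),(y,y^* )\in\operatorname{gra}A$. $A^{-1}$ is the set-valued inverse (graph reversed). For a monotone linear relation $B$, $q_B(x)=\frac12\langle x,Bx\rangle$ for $x\in\operatorname{dom}B$ (a single value) and $q_B(x)=\infty$ otherwise. $f^*(y)=\sup_x\{\langle y,x\rangle-f(x)\}$ is the Fenchel conjugate. *)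

(* Defs.v *)
From HB Require Import structures.
From mathcomp Require Import all_boot all_order all_algebra.
From mathcomp Require Import all_classical all_reals all_analysis.
Import numFieldNormedType.Exports.
Set Implicit Arguments. Unset Strict Implicit. Unset Printing Implicit Defensive.
Import Order.TTheory GRing.Theory Num.Theory.
Local Open Scope classical_set_scope.
Local Open Scope ring_scope.

Section Defs.
Context {R : realType} {n : nat}.
Local Notation V := 'rV[R]_n.

Definition dotp (u v : V) : R := \sum_(i < n) u 0 i * v 0 i.

(* a set-valued operator R^n ⇉ R^n, identified with its graph *)
Definition graph_rel := set (V * V).

Definition is_linear_relation (A : graph_rel) : Prop :=
  A (0, 0) /\
  (forall p q, A p -> A q -> A (p.1 + q.1, p.2 + q.2)) /\
  (forall (a : R) p, A p -> A (a *: p.1, a *: p.2)).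

Definition monotone_rel (A : graph_rel) : Prop :=
  forall p q, A p -> A q -> 0 <= dotp (p.2 - q.2) (p.1 - q.1).

Definition maximally_monotone (A : graph_rel) : Prop :=
  monotone_rel A /\
  forall B : graph_rel, monotone_rel B -> A `<=` B -> B = A.

Definition symmetric_rel (A : graph_rel) : Prop :=
  forall p q, A p -> A q -> dotp p.1 q.2 = dotp q.1 p.2.

Definition inv_rel (A : graph_rel) : graph_rel := [set p | A (p.2, p.1)].

Definition dom_rel (A : graph_rel) : set V := [set x | exists y, A (x, y)].
Definition ran_rel (A : graph_rel) : set V := [set y | exists x, A (x, y)].

Definition qf (B : graph_rel) (x : V) : \bar R :=
  if asbool (dom_rel B x)
  then ((2%:R)^-1 * dotp x (xget 0 [set y | B (x, y)]))%:E
  else +oo%E.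

Definition fconj (f : V -> \bar R) (y : V) : \bar R :=
  ereal_sup [set ((dotp y x)%:E - f x)%E | x in [set: V]].

Definition convex_efun (f : V -> \bar R) : Prop :=
  forall (x y : V) (t : R), 0 < t < 1 ->
    let z := t *: x + (1 - t) *: y in
    (f z <= t%:E * f x + (1 - t)%:E * f y)%E.

End Defs.

(* Main.v *)
Require Import Defs.
From HB Require Import structures.
From mathcomp Require Import all_boot all_order all_algebra.
From mathcomp Require Import all_classical all_reals all_analysis.
From mathcomp Require Import zify lra.
Import numFieldNormedType.Exports.
Import Order.TTheory GRing.Theory Num.Theory.
Local Open Scope classical_set_scope.
Local Open Scope ring_scope.

Section Aux.
Context {R : realType} {n : nat}.
Local Notation V := 'rV[R]_n.
Implicit Types (u v w : V) (A : set (V * V)).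

Lemma dotpE u v : dotp u v = (u *m v^T) 0 0.
Proof. by rewrite /dotp !mxE; apply: eq_bigr => j _; rewrite mxE. Qed.
Lemma dotpC u v : dotp u v = dotp v u.
Proof. by apply: eq_bigr => i _; rewrite mulrC. Qed.
Lemma dotpDl u v w : dotp (u + v) w = dotp u w + dotp v w.
Proof. by rewrite /dotp -big_split; apply: eq_bigr => i _; rewrite mxE mulrDl. Qed.
Lemma dotpNl u w : dotp (- u) w = - dotp u w.
Proof. by rewrite /dotp -sumrN; apply: eq_bigr => i _; rewrite mxE mulNr. Qed.
Lemma dotpZl (a : R) u w : dotp (a *: u) w = a * dotp u w.
Proof. by rewrite /dotp mulr_sumr; apply: eq_bigr => i _; rewrite mxE mulrA. Qed.
Lemma dotpBl u v w : dotp (u - v) w = dotp u w - dotp v w.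
Proof. by rewrite dotpDl dotpNl. Qed.
Lemma dotpDr u v w : dotp w (u + v) = dotp w u + dotp w v.
Proof. by rewrite dotpC dotpDl !(dotpC w). Qed.
Lemma dotpNr u w : dotp w (- u) = - dotp w u.
Proof. by rewrite dotpC dotpNl dotpC. Qed.
Lemma dotpZr (a : R) u w : dotp w (a *: u) = a * dotp w u.
Proof. by rewrite dotpC dotpZl dotpC. Qed.
Lemma dotpBr u v w : dotp w (u - v) = dotp w u - dotp w v.
Proof. by rewrite dotpDr dotpNr. Qed.
Lemma dotp0l w : dotp 0 w = 0.
Proof. by rewrite -(scale0r 0) dotpZl mul0r. Qed.
Lemma dotp0r w : dotp w 0 = 0.
Proof. by rewrite dotpC dotp0l. Qed.

Lemma qf_val A x xs : symmetric_rel A -> A (x, xs) ->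
  qf A x = (2%:R^-1 * dotp x xs)%:E.
Proof.
move=> sym Hx; rewrite /qf asboolT; last by exists xs.
have Hx' := xgetI 0 (P := [set y | A (x, y)]) Hx.
by rewrite (sym _ _ Hx Hx').
Qed.

Lemma qf_nd A x : ~ dom_rel A x -> qf A x = +oo%E.
Proof. by move=> h; rewrite /qf asboolF. Qed.

End Aux.
Arguments qf_val {R n A x xs}. Arguments qf_nd {R n A x}.

Section Aux2.
Context {R : realType} {n : nat}.
Local Notation V := 'rV[R]_n.
Implicit Types (u v w : V) (A : set (V * V)).

Lemma colspace m k (M : 'M[R]_(m, k)) (c : 'cV[R]_m) :
  (forall u : 'rV_m, u *m M = 0 -> u *m c = 0) -> exists v : 'cV_k, c = M *m v.
Proof.
move=> H.
have Hk : (kermx M <= kermx c)%MS.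
  apply/sub_kermxP; apply/row_matrixP => i; rewrite row_mul row0; apply: H.
  by rewrite -row_mul mulmx_ker row0.
have E : (kermx (row_mx M c) :=: kermx M)%MS.
  apply/eqmxP; apply/andP; split.
    rewrite sub_kermx; have := mulmx_ker (row_mx M c).
    by rewrite mul_mx_row -row_mx0 => /eq_row_mx [-> _].
  by rewrite sub_kermx mul_mx_row mulmx_ker (sub_kermxP Hk) row_mx0.
have Hr : \rank (row_mx M c) = \rank M.
  have := mxrank_ker (row_mx M c); rewrite E mxrank_ker.
  have h1 := rank_leq_row M; have h2 := rank_leq_row (row_mx M c); lia.
have S1 : (M^T <= (row_mx M c)^T)%MS by rewrite tr_row_mx -addsmxE addsmxSl.
have := mxrank_leqif_sup S1; rewrite !mxrank_tr Hr => -[_].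
rewrite eqxx => /esym S2.
have : (c^T <= M^T)%MS.
  by apply: submx_trans S2; rewrite tr_row_mx -addsmxE addsmxSr.
case/submxP => D HD; exists D^T.
by rewrite -[c]trmxK HD trmx_mul trmxK.
Qed.

Lemma rep A : is_linear_relation A ->
  exists m (X Y : 'M[R]_(m, n)), (forall u : 'rV_m, A (u *m X, u *m Y)) /\
    (forall p, A p -> exists u : 'rV_m, p = (u *m X, u *m Y)).
Proof.
move=> [A0 [Aadd Ascale]].
pose P k := `[< exists m (X Y : 'M[R]_(m, n)),
   (forall u : 'rV_m, A (u *m X, u *m Y)) /\ \rank (row_mx X Y) = k >].
have P0 : exists k, P k.
  exists 0%N; apply/asboolP; exists 0%N, 0, 0; split => [u|].
    by rewrite !mulmx0.
  by rewrite row_mx0 mxrank0.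
have Pub : forall k, P k -> (k <= n + n)%N.
  by move=> k /asboolP [m [X [Y [_ <-]]]]; exact: rank_leq_col.
case: (ex_maxnP P0 Pub) => k /asboolP [m [X [Y [HA Hr]]]] Hmax.
exists m, X, Y; split => // -[p1 p2] Ap.
case: (boolP (row_mx p1 p2 <= row_mx X Y)%MS) => [/submxP [u Hu] | Hn].
  by exists u; rewrite mul_mx_row in Hu; case/eq_row_mx: Hu => -> ->.
exfalso.
pose X' := col_mx X p1; pose Y' := col_mx Y p2.
have HA' : forall u : 'rV_(m + 1), A (u *m X', u *m Y').
  move=> u; rewrite -[u]hsubmxK !mul_row_col.
  set a := lsubmx u; set b := rsubmx u.
  rewrite [b]mx11_scalar !mul_scalar_mx.
  exact: (Aadd _ _ (HA a) (Ascale (b 0 0) _ Ap)).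
have : (\rank (row_mx X' Y') <= k)%N.
  by apply: Hmax; apply/asboolP; exists (m + 1)%N, X', Y'.
rewrite /X' /Y' -block_mxEh block_mxEv -addsmxE.
have := mxrank_leqif_sup (addsmxSl (row_mx X Y) (row_mx p1 p2)).
move/ltn_leqif; rewrite addsmx_sub submx_refl (negbTE Hn) /= Hr => lt.
by rewrite leqNgt lt.
Qed.

End Aux2.

Section Aux3.
Context {R : realType} {n : nat}.
Local Notation V := 'rV[R]_n.
Implicit Types (A : set (V * V)).

Lemma key A (y : V) (S : R) : is_linear_relation A -> maximally_monotone A ->
  (forall x xs, A (x, xs) -> dotp y x - 2%:R^-1 * dotp x xs <= S) ->
  exists z, A (z, y).
Proof.
move=> lin [mono Hmax] HS.
have [A0 [Aadd Ascale]] := lin.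
case: (rep _ lin) => m [X [Y [HA HR]]].
have [v Hv] : exists v : 'cV_m, X *m y^T = (X *m Y^T) *m v.
  apply: colspace => u Hu.
  have E : dotp (u *m X) (u *m Y) = 0.
    by rewrite dotpE trmx_mul !mulmxA -(mulmxA u X) Hu !mul0mx mxE.
  have E2 : dotp (u *m X) y = 0.
    rewrite dotpC; set d := dotp y (u *m X).
    have Ht : forall t : R, t * d <= S.
      move=> t; have := HS _ _ (HA (t *: u)).
      by rewrite -!scalemxAl dotpZr dotpZl dotpZr E !mulr0 subr0.
    apply/eqP; apply: contraT => hd.
    have := Ht ((`|S| + 1) / d); rewrite divfK //.
    have := ler_norm S; lra.
  apply/matrixP => i j; rewrite !ord1 [RHS]mxE.
  by rewrite mulmxA -E2 dotpE.
set z := v^T *m X; set zs := v^T *m Y.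
have Az : A (z, zs) by exact: HA.
set w := y - zs.
have Hw : forall a as_, A (a, as_) -> dotp w a = 0.
  move=> a as_ /HR [u [-> _]].
  rewrite /w dotpBl (dotpC y) (dotpC zs) !dotpE -mulmxA Hv.
  by rewrite /zs trmx_mul trmxK !mulmxA subrr.
have A0w : A (0, w).
  pose B := A `|` [set (0, w)].
  have monoB : monotone_rel B.
    move=> [p1 p2] [q1 q2] /= [Hp|[-> ->]] [Hq|[-> ->]] /=.
    - exact: (mono (p1, p2) (q1, q2)).
    - rewrite !subr0 dotpBl (Hw _ _ Hp) subr0.
      by have := mono (p1, p2) (0, 0) Hp A0; rewrite /= !subr0.
    - rewrite !sub0r dotpNr dotpBl (Hw _ _ Hq) sub0r opprK.
      by have := mono (q1, q2) (0, 0) Hq A0; rewrite /= !subr0.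
    - by rewrite !subrr dotp0r.
  have := Hmax B monoB (fun p Ap => or_introl Ap).
  by move=> <-; right.
exists z.
have := Aadd _ _ Az A0w; rewrite /= addr0 /w (addrC zs) subrK.
done.
Qed.

End Aux3.
Arguments key {R n A y} S.

Section Aux4.
Context {R : realType} {n : nat}.
Local Notation V := 'rV[R]_n.
Implicit Types (A : set (V * V)).

Lemma conj_eq A : is_linear_relation A -> maximally_monotone A ->
  symmetric_rel A -> fconj (qf A) = qf (inv_rel A).
Proof.
move=> lin mm sym; have [mono _] := mm; have [A0 _] := lin.
apply/funext => y.
case: (pselect (exists z, A (z, y))) => [[z Hz] | Hn].
  rewrite [RHS]/qf asboolT /=; last by exists z.
  have Hz' := xgetI 0 (P := [set x | inv_rel A (y, x)]) Hz.
  set z' := xget _ _ in Hz' *.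
  apply/le_anti/andP; split.
    apply: ge_ereal_sup => _ [x _ <-].
    case: (pselect (dom_rel A x)) => [[xs Hxs]|Hnd].
      rewrite (qf_val sym Hxs) -EFinB lee_fin.
      have h1 := mono _ _ Hxs Hz'; have h2 := sym _ _ Hxs Hz'.
      move: h1 h2; rewrite /= !dotpBl !dotpBr (dotpC xs x) (dotpC xs z') (dotpC y x) => h1 h2.
      lra.
    by rewrite qf_nd // addeNy leNye.
  apply: ereal_sup_ubound; exists z' => //.
  rewrite (qf_val sym Hz') -EFinB (dotpC z'); congr (_%:E); lra.
rewrite [RHS]/qf asboolF //.
have H0 : ((dotp y 0)%:E - qf A 0 <= fconj (qf A) y)%E.
  by apply: ereal_sup_ubound; exists 0.
move: H0; rewrite (qf_val sym A0) dotp0r dotp0r mulr0 subee //.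
case E: (fconj (qf A) y) => [S| |] // _.
exfalso; apply: Hn; apply: (key S lin mm) => x xs Hx.
have : ((dotp y x)%:E - qf A x <= fconj (qf A) y)%E.
  by apply: ereal_sup_ubound; exists x.
by rewrite E (qf_val sym Hx) -EFinB lee_fin.
Qed.

Lemma inv_inv A : inv_rel (inv_rel A) = A.
Proof. by apply/seteqP; split => -[a b]. Qed.

Lemma inv_lin A : is_linear_relation A -> is_linear_relation (inv_rel A).
Proof.
move=> [A0 [Aadd Ascale]]; split => //; split.
  by move=> p q Hp Hq; exact: (Aadd (p.2, p.1) (q.2, q.1)).
by move=> a p Hp; exact: (Ascale a (p.2, p.1)).
Qed.

Lemma inv_mono A : monotone_rel A -> monotone_rel (inv_rel A).
Proof.
by move=> mono p q Hp Hq; rewrite dotpC; exact: (mono (p.2, p.1) (q.2, q.1)).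
Qed.

Lemma inv_mm A : maximally_monotone A -> maximally_monotone (inv_rel A).
Proof.
move=> [mono Hmax]; split; first exact: inv_mono.
move=> B mB sub.
have : inv_rel B = A.
  apply: Hmax; first exact: inv_mono.
  by move=> [a b] Hp; apply: sub.
by move=> <-; rewrite inv_inv.
Qed.

Lemma inv_sym A : symmetric_rel A -> symmetric_rel (inv_rel A).
Proof.
move=> sym p q Hp Hq; have := sym (p.2, p.1) (q.2, q.1) Hp Hq => /=.
by rewrite dotpC => ->; rewrite dotpC.
Qed.

End Aux4.

Section Aux5.
Context {R : realType} {n : nat}.
Local Notation V := 'rV[R]_n.
Implicit Types (A : set (V * V)).

Lemma dotp_cont (w : V) (r : R) : continuous (fun y : V => dotp y w - r).
Proof.
have H : forall s, continuous (fun y : V => \sum_(j <- s) y 0 j * w 0 j).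
  elim => [|i s IH].
    have -> : (fun y : V => \sum_(j <- [::]) y 0 j * w 0 j) = fun _ => 0.
      by apply/funext => y; rewrite big_nil.
    exact: cst_continuous.
  have -> : (fun y : V => \sum_(j <- i :: s) y 0 j * w 0 j) =
     fun y => y 0 i * w 0 i + \sum_(j <- s) y 0 j * w 0 j.
    by apply/funext => y; rewrite big_cons.
  move=> x.
  apply: (continuousD (f := fun y : V => y 0 i * w 0 i)
          (g := fun y : V => \sum_(j <- s) y 0 j * w 0 j)); last exact: IH.
  apply: (continuousM (s := fun y : V => y 0 i) (t := fun _ => w 0 i)); last exact: cst_continuous.
  exact: coord_continuous.
move=> x; apply: (continuousB (f := fun y : V => dotp y w) (g := fun _ => r)); last exact: cst_continuous.
exact: H.
Qed.

Lemma fconj_lsc (h : V -> \bar R) : lower_semicontinuous (fconj h).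
Proof.
move=> x a; rewrite /fconj => /ereal_sup_gt [_ [w _ <-] Hlt].
case Ehw: (h w) => [r| |] in Hlt *.
- exists ((fun y : V => dotp y w - r) @^-1` [set u | a < u]).
    apply: (dotp_cont w r x); apply: open_nbhs_nbhs; split; first exact: open_gt.
    by rewrite /= -lte_fin EFinB.
  move=> y /= Hy; apply: (lt_le_trans _ (ereal_sup_ubound _)).
    2: by exists w.
  by rewrite Ehw -EFinB lte_fin.
- by rewrite addeNy in Hlt.
- exists setT; first exact: filterT.
  move=> y _; apply: (lt_le_trans _ (ereal_sup_ubound _)).
    2: by exists w.
  by rewrite Ehw /= ltey.
Qed.

Lemma qf_convex A : is_linear_relation A -> monotone_rel A ->
  symmetric_rel A -> convex_efun (qf A).
Proof.
move=> [A0 [Aadd Ascale]] mono sym x y t /andP [t0 t1].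
change (qf A (t *: x + (1 - t) *: y) <= t%:E * qf A x + (1 - t)%:E * qf A y)%E.
set z := t *: x + (1 - t) *: y.
case: (pselect (dom_rel A x)) => [[xs Hx]|Hnx]; last first.
  rewrite (qf_nd Hnx) mulry gtr0_sg // mul1e addye ?leey //.
  case: (pselect (dom_rel A y)) => [[ys Hy]|Hny].
    by rewrite (qf_val sym Hy).
  by rewrite (qf_nd Hny) mulry gtr0_sg ?subr_gt0 // mul1e.
case: (pselect (dom_rel A y)) => [[ys Hy]|Hny]; last first.
  rewrite (qf_nd Hny) (mulry (1 - t)) gtr0_sg ?subr_gt0 // mul1e addey ?leey //.
  by rewrite (qf_val sym Hx).
have Hz : A (z, t *: xs + (1 - t) *: ys).
  exact: (Aadd (_, _) (_, _) (Ascale t _ Hx) (Ascale (1 - t) _ Hy)).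
rewrite (qf_val sym Hz) (qf_val sym Hx) (qf_val sym Hy) -!EFinM -EFinD lee_fin.
have := mono _ _ Hx Hy; have := sym _ _ Hx Hy.
rewrite /z /= !dotpBl !dotpBr !dotpDl !dotpDr !dotpZl !dotpZr.
rewrite (dotpC xs x) (dotpC xs y) (dotpC ys x) (dotpC ys y).
set a := dotp x xs; set b := dotp x ys; set c := dotp y xs; set d := dotp y ys.
move=> h1 h2.
have : 0 <= t * (1 - t) * (a - b - c + d).
  by apply: mulr_ge0; [apply: mulr_ge0; lra | lra].
nra.
Qed.

End Aux5.

Theorem proposition4p25 (R : realType) (n : nat) (A : set ('rV[R]_n * 'rV[R]_n)) :
  is_linear_relation A -> maximally_monotone A -> symmetric_rel A ->
  fconj (qf A) = qf (inv_rel A) /\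
  (forall y, fconj (qf A) y =
     if asbool (ran_rel A y)
     then ((2%:R)^-1 * dotp y (xget 0 [set x | inv_rel A (y, x)]))%:E
     else +oo%E) /\
  (forall x, fconj (fconj (qf A)) x =
     if asbool (ran_rel (inv_rel A) x)
     then ((2%:R)^-1 * dotp x (xget 0 [set y | A (x, y)]))%:E
     else +oo%E) /\
  fconj (fconj (qf A)) = qf A /\
  lower_semicontinuous (qf A) /\ convex_efun (qf A).
Proof.
move=> lin mm sym.
have E1 := conj_eq _ lin mm sym.
have E2 : fconj (fconj (qf A)) = qf A.
  by rewrite E1 (conj_eq _ (inv_lin _ lin) (inv_mm _ mm) (inv_sym _ sym)) inv_inv.
split => //; split; first by move=> y; rewrite E1.
split; first by move=> x; rewrite E2.
split => //; split; first by rewrite -E2; exact: fconj_lsc.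
exact: qf_convex _ lin mm.1 sym.
Qed.
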